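(* Let $S$ be a nilpotent right loop with central series $\{1\}=\mathcal Z_0\le\mathcal Z_1\le\cdots\le\mathcal Z_n=S$. For $0\le j\le n-1$ let $\theta_j:G_S\to G_{S/\mathcal Z_j}$ be the surjective homomorphism $f^S(y,z)\mapsto f^{S/\mathcal Z_j}(\mathcal Z_j\circ y,\mathcal Z_j\circ z)$ induced by the natural projection. Then $\{1\}=\ker\theta_0\le\ker\theta_1\le\cdots\le\ker\theta_{n-1}=G_S$, and for each $j$ the group $\ker\theta_{j+1}/\ker\theta_j$ is isomorphic to a subgroup of $\prod_{\mathcal B}\mathcal Z_{j+1}/\mathcal Z_j$ for some index set $\mathcal B$.
   Context: A right loop is a set $S$ with binary operation $\circ$ and two-sided identity $1$ such that each equation $X\circ a=b$ has a unique solution. For $y,z\in S$, $f^S(y,z):S\to S$ sends $x$ to the unique $X$ with $X\circ(y\circ z)=(x\circ y)\circ z$; $G_S\le\mathrm{Sym}(S)$ is generated by all $f^S(y,z)$. A congruence is an equivalence relation which is a right subloop of $S\times S$; an invariant right subloop is the class $T$ of $1$ under a congruence, $S/T=\{T\circ x\}$ with $(T\circ x)\circ(T\circ y)=T\circ(x\circ y)$. For congruences $\beta,\gamma$, $\gamma$ centralizes $\beta$ if there is a congruence $(\gamma|\beta)$ on the right loop $\beta\subseteq S\times S$ with: (i) $(x,y)(\gamma|\beta)(u,v)\Rightarrow x\gamma u$; (ii) for $(x,y)\in\beta$, $(u,v)\mapsto u$ is a bijection from the $(\gamma|\beta)$-class of $(x,y)$ to the $\gamma$-class of $x$; (iii)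 $(x,y)\in\gamma\Rightarrow(x,x)(\gamma|\beta)(y,y)$; (iv) $(x,y)(\gamma|\beta)(u,v)\Rightarrow(y,x)(\gamma|\beta)(v,u)$; (v) $(x,y)(\gamma|\beta)(u,v)$, $(y,z)(\gamma|\beta)(v,w)\Rightarrow(x,z)(\gamma|\beta)(u,w)$. The center $\mathcal Z(S)$ is the class of $1$ under the unique maximal congruence centralized by $S\times S$; it is an abelian group. $S$ is nilpotent if the series $\mathcal Z_0=\{1\}$, $\mathcal Z_1=\mathcal Z(S)$, $\mathcal Z_{i+1}/\mathcal Z_i=\mathcal Z(S/\mathcal Z_i)$ (each $\mathcal Z_i$ an invariant right subloop) reaches $\mathcal Z_n=S$. *)

(* Defs.v *)
From Stdlib Require Import Arith ClassicalEpsilon.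
Set Implicit Arguments.

Section RightLoops.
Variable S : Type.
Variable op : S -> S -> S.
Variable e : S.

Definition is_right_loop : Prop :=
  (forall x, op e x = x) /\ (forall x, op x e = x) /\
  (forall a b, exists! X, op X a = b).

Definition is_f (y z : S) (f : S -> S) : Prop :=
  forall x, op (f x) (op y z) = op (op x y) z.

Definition f_gen (f : S -> S) : Prop := exists y z, is_f y z f.
End RightLoops.

Inductive gen_group (A : Type) (gens : (A -> A) -> Prop) : (A -> A) -> Prop :=
| gg_id : gen_group gens (fun x => x)
| gg_gen : forall f, gens f -> gen_group gens f
| gg_inv : forall f g, gens f -> (forall x, f (g x) = x) -> (forall x, g (f x) = x) ->
           gen_group gens g
| gg_comp : forall f g, gen_group gens f -> gen_group gens g ->
            gen_group gens (fun x => f (g x)).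

Definition G_of (S : Type) (op : S -> S -> S) : (S -> S) -> Prop :=
  gen_group (f_gen op).

(** A congruence relative to a carrier predicate P (a right subloop of the
    ambient right loop): an equivalence relation on P which, viewed as a subset
    of P x P, is closed under the componentwise operation, contains the
    identity pair (by reflexivity), and is closed under right division. *)
Definition congr_on (A : Type) (op : A -> A -> A) (P : A -> Prop)
  (R : A -> A -> Prop) : Prop :=
  (forall a b, R a b -> P a /\ P b) /\
  (forall a, P a -> R a a) /\
  (forall a b, R a b -> R b a) /\
  (forall a b c, R a b -> R b c -> R a c) /\
  (forall a a' b b', R a a' -> R b b' -> R (op a b) (op a' b')) /\
  (forall a a' b b' X X', P X -> P X' -> R a a' -> R b b' ->
      op X a = b -> op X' a' = b' -> R X X').

Definition congruence (A : Type) (op : A -> A -> A) (R : A -> A -> Prop) : Prop :=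
  congr_on op (fun _ => True) R.

Definition pair_op (A : Type) (op : A -> A -> A) (p q : A * A) : A * A :=
  (op (fst p) (fst q), op (snd p) (snd q)).

Definition centralizes (A : Type) (op : A -> A -> A)
  (gamma beta : A -> A -> Prop) : Prop :=
  exists C : A * A -> A * A -> Prop,
    congr_on (pair_op op) (fun p => beta (fst p) (snd p)) C /\
    (forall x y u v, C (x, y) (u, v) -> gamma x u) /\
    (forall x y, beta x y ->
       (forall u, gamma x u -> exists v, C (x, y) (u, v)) /\
       (forall u v v', C (x, y) (u, v) -> C (x, y) (u, v') -> v = v')) /\
    (forall x y, gamma x y -> C (x, x) (y, y)) /\
    (forall x y u v, C (x, y) (u, v) -> C (y, x) (v, u)) /\
    (forall x y z u v w, C (x, y) (u, v) -> C (y, z) (v, w) -> C (x, z) (u, w)).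

Definition fullrel (A : Type) : A -> A -> Prop := fun _ _ => True.

Definition center (A : Type) (op : A -> A -> A) (e : A) : A -> Prop :=
  fun x => exists zeta : A -> A -> Prop,
    congruence op zeta /\ centralizes op (@fullrel A) zeta /\
    (forall zeta', congruence op zeta' -> centralizes op (@fullrel A) zeta' ->
       forall a b, zeta' a b -> zeta a b) /\
    zeta e x.

Section Quotient.
Variable S : Type.
Variable op : S -> S -> S.
Variable T : S -> Prop.

Definition coset (x : S) : S -> Prop := fun y => exists t, T t /\ y = op t x.

Definition quot : Type := { P : S -> Prop | exists x, P = coset x }.

Definition qclass (x : S) : quot := exist _ (coset x) (ex_intro _ x eq_refl).

Definition qrep (P : quot) : S := proj1_sig (constructive_indefinite_description _ (proj2_sig P)).

Definition qop (P Q : quot) : quot := qclass (op (qrep P) (qrep Q)).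
End Quotient.
Arguments qop {S} op T P Q.
Arguments qrep {S op T} P.
Arguments qclass {S} op T x.

Fixpoint Zser (S : Type) (op : S -> S -> S) (e : S) (i : nat) : S -> Prop :=
  match i with
  | O => fun x => x = e
  | Datatypes.S m =>
      fun x => center (qop op (Zser op e m)) (qclass op (Zser op e m) e)
                      (qclass op (Zser op e m) x)
  end.

Definition nilpotent (S : Type) (op : S -> S -> S) (e : S) : Prop :=
  exists n, forall x, Zser op e n x.

(** theta_j(g) : the permutation of S/Z_j induced by g (T∘x |-> T∘(g x));
    on generators this is f^S(y,z) |-> f^{S/Z_j}(Z_j∘y, Z_j∘z). *)
Definition theta (S : Type) (op : S -> S -> S) (e : S) (j : nat) (g : S -> S)
  : quot op (Zser op e j) -> quot op (Zser op e j) :=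
  fun P => qclass op (Zser op e j) (g (qrep P)).

Arguments theta {S} op e j g P.

Definition ker_theta (S : Type) (op : S -> S -> S) (e : S) (j : nat) (g : S -> S) : Prop :=
  G_of op g /\ forall P, theta op e j g P = P.

Arguments ker_theta {S} op e j g.
Arguments Zser {S} op e i x.
Arguments G_of {S} op _.

(* Main.v *)
Require Import Defs.
From Stdlib Require Import Arith Lia ClassicalEpsilon FunctionalExtensionality PropExtensionality ProofIrrelevance.
Unset Implicit Arguments.

Section Loop.
Variable L : Type.
Variable op : L -> L -> L.
Variable e : L.
Hypothesis HL : is_right_loop op e.

Lemma lid x : op e x = x. Proof. destruct HL as [h _]; auto. Qed.
Lemma rid x : op x e = x. Proof. destruct HL as [_ [h _]]; auto. Qed.
Lemma rcancel u v a : op u a = op v a -> u = v.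
Proof. intro H. destruct HL as [_ [_ h]]. destruct (h a (op u a)) as [X [_ HX]].
  rewrite <- (HX u eq_refl), <- (HX v (eq_sym H)). reflexivity. Qed.
Lemma rsolve a b : exists X, op X a = b.
Proof. destruct HL as [_ [_ h]]. destruct (h a b) as [X [HX _]]; eauto. Qed.

Definition Zc a := forall x y, op a x = op x a /\ op (op a x) y = op a (op x y) /\
  op (op x a) y = op x (op a y) /\ op (op x y) a = op x (op y a).

Lemma ZcC a x : Zc a -> op a x = op x a. Proof. intro H; apply (H x x). Qed.
Lemma Zc1 a x y : Zc a -> op (op a x) y = op a (op x y). Proof. intro H; apply (H x y). Qed.
Lemma Zc2 a x y : Zc a -> op (op x a) y = op x (op a y). Proof. intro H; apply (H x y). Qed.
Lemma Zc3 a x y : Zc a -> op (op x y) a = op x (op y a). Proof. intro H; apply (H x y). Qed.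

Lemma Zc_e : Zc e.
Proof. intros x y. rewrite !lid, !rid. repeat split; auto. Qed.

Lemma Zc_mul a b : Zc a -> Zc b -> Zc (op a b).
Proof.
  intros Ha Hb x y. repeat split.
  - rewrite (Zc1 a b x Ha), (ZcC b x Hb), (ZcC a (op x b) Ha), (Zc3 a x b Ha), <- (ZcC a b Ha). auto.
  - rewrite (Zc1 a b x Ha), (Zc1 a (op b x) y Ha), (Zc1 b x y Hb), (Zc1 a b (op x y) Ha). auto.
  - rewrite <- (Zc3 b x a Hb), (Zc2 b (op x a) y Hb), (Zc2 a x (op b y) Ha), (Zc1 a b y Ha). auto.
  - rewrite <- (Zc3 b (op x y) a Hb), (Zc3 a x y Ha), (Zc3 b x (op y a) Hb), (Zc3 b y a Hb). auto.
Qed.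

Lemma Zc_inv a a' : Zc a -> op a' a = e -> Zc a'.
Proof.
  intros Ha Hi.
  assert (c1 : forall x, op (op a' x) a = x).
  { intro x. rewrite (Zc3 a a' x Ha), <- (ZcC a x Ha), <- (Zc2 a a' x Ha), Hi, lid. auto. }
  assert (c2 : forall x, op (op x a') a = x).
  { intro x. rewrite (Zc3 a x a' Ha), Hi, rid. auto. }
  intros x y. repeat split.
  - apply (rcancel _ _ a). rewrite c1, c2. auto.
  - apply (rcancel _ _ a). rewrite c1, (Zc3 a (op a' x) y Ha), <- (ZcC a y Ha),
      <- (Zc2 a (op a' x) y Ha), c1. auto.
  - apply (rcancel _ _ a). rewrite (Zc3 a x (op a' y) Ha), c1, (Zc3 a (op x a') y Ha),
      <- (ZcC a y Ha), <- (Zc2 a (op x a') y Ha), c2. auto.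
  - apply (rcancel _ _ a). rewrite c2, (Zc3 a x (op y a') Ha), c2. auto.
Qed.

Lemma Zc_L1 a c x y : Zc a -> Zc c -> op (op a c) (op x y) = op (op a x) (op c y).
Proof.
  intros Ha Hc. rewrite (Zc1 a c (op x y) Ha), <- (Zc1 c x y Hc), (ZcC c x Hc), (Zc2 c x y Hc),
    <- (Zc1 a x (op c y) Ha). auto.
Qed.

Lemma Zc_ex a c w : Zc a -> Zc c -> op a (op c w) = op c (op a w).
Proof.
  intros Ha Hc. rewrite <- (Zc1 a c w Ha), (ZcC a c Ha), (Zc1 c a w Hc). auto.
Qed.

Lemma lcancelZ c u v : Zc c -> op c u = op c v -> u = v.
Proof. intros Hc H. apply (rcancel _ _ c). rewrite <- (ZcC c u Hc), <- (ZcC c v Hc). auto. Qed.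

Definition zmax x y := exists a b, Zc a /\ Zc b /\ op a x = op b y.

Lemma zmax_cong : congruence op zmax.
Proof.
  unfold congruence, congr_on, zmax. split; [|split; [|split; [|split; [|split]]]].
  - intros a b _; split; auto.
  - intros a _. exists e, e. refine (conj Zc_e (conj Zc_e _)); auto.
  - intros x y [a [b [Ha [Hb H]]]]. exists b, a. auto.
  - intros x y z [a [b [Ha [Hb H]]]] [c [d [Hc [Hd H']]]].
    exists (op c a), (op b d). refine (conj (Zc_mul _ _ _ _) (conj (Zc_mul _ _ _ _) _)); auto.
    rewrite (Zc1 c a x Hc), H, (Zc_ex c b y Hc Hb), H', <- (Zc1 b d z Hb). auto.
  - intros x x' y y' [a [b [Ha [Hb H]]]] [c [d [Hc [Hd H']]]].
    exists (op a c), (op b d). refine (conj (Zc_mul _ _ _ _) (conj (Zc_mul _ _ _ _) _)); auto.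
    rewrite (Zc_L1 a c x y Ha Hc), (Zc_L1 b d x' y' Hb Hd), H, H'. auto.
  - intros a0 a0' b0 b0' X X' _ _ [p [q [Hp [Hq H1]]]] [r [s [Hr [Hs H2]]]] E1 E2.
    exists (op r q), (op s p). refine (conj (Zc_mul _ _ _ _) (conj (Zc_mul _ _ _ _) _)); auto.
    apply (rcancel _ _ (op p a0)).
    rewrite <- (Zc_L1 (op r q) p X a0 (Zc_mul r q Hr Hq) Hp), H1.
    rewrite <- (Zc_L1 (op s p) q X' a0' (Zc_mul s p Hs Hp) Hq), E1, E2.
    rewrite (Zc1 (op s p) q b0' (Zc_mul s p Hs Hp)), (Zc1 s p (op q b0') Hs),
      (Zc_ex p q b0' Hp Hq), (Zc_ex s q (op p b0') Hs Hq), (Zc_ex s p b0' Hs Hp), <- H2.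
    rewrite (Zc1 (op r q) p b0 (Zc_mul r q Hr Hq)), (Zc1 r q (op p b0) Hr),
      (Zc_ex r q (op p b0) Hr Hq), (Zc_ex r p b0 Hr Hp). auto.
Qed.

Definition Cz (p q : L * L) := exists a b, Zc a /\ Zc b /\
  op a (snd p) = op b (fst p) /\ op a (snd q) = op b (fst q).

Lemma key_rdiv a b c d X1 X2 p1 p2 q1 q2 : Zc a -> Zc b -> Zc c -> Zc d ->
  op a p2 = op b p1 -> op c q2 = op d q1 -> op X1 p1 = q1 -> op X2 p2 = q2 ->
  op (op c b) X2 = op (op d a) X1.
Proof.
  intros Ha Hb Hc Hd H1 H3 E1 E2. apply (rcancel _ _ (op a p2)).
  assert (L1 : op (op (op c b) X2) (op a p2) = op b (op a (op d q1))).
  { rewrite <- (Zc_L1 (op c b) a X2 p2 (Zc_mul c b Hc Hb) Ha), E2.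
    rewrite (Zc1 (op c b) a q2 (Zc_mul c b Hc Hb)), (Zc1 c b (op a q2) Hc),
      (Zc_ex c b (op a q2) Hc Hb), (Zc_ex c a q2 Hc Ha), H3. auto. }
  assert (R1 : op (op (op d a) X1) (op a p2) = op b (op a (op d q1))).
  { rewrite H1, <- (Zc_L1 (op d a) b X1 p1 (Zc_mul d a Hd Ha) Hb), E1.
    rewrite (Zc1 (op d a) b q1 (Zc_mul d a Hd Ha)), (Zc1 d a (op b q1) Hd),
      (Zc_ex d a (op b q1) Hd Ha), (Zc_ex d b q1 Hd Hb), (Zc_ex a b (op d q1) Ha Hb). auto. }
  rewrite L1, R1. auto.
Qed.

Lemma Cz_congr : congr_on (pair_op op) (fun p => zmax (fst p) (snd p)) Cz.
Proof.
  unfold congr_on, Cz, zmax. split; [|split; [|split; [|split; [|split]]]].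
  - intros [x y] [u v] [a [b [Ha [Hb [H1 H2]]]]]; simpl in *. split.
    + exists b, a. refine (conj Hb (conj Ha _)); auto.
    + exists b, a. refine (conj Hb (conj Ha _)); auto.
  - intros [x y] [a [b [Ha [Hb H]]]]; simpl in *. exists b, a.
    refine (conj Hb (conj Ha (conj _ _))); auto.
  - intros [x y] [u v] [a [b [Ha [Hb [H1 H2]]]]]; simpl in *. exists a, b.
    refine (conj Ha (conj Hb (conj _ _))); auto.
  - intros [x y] [u v] [s t] [a [b [Ha [Hb [H1 H2]]]]] [c [d [Hc [Hd [H3 H4]]]]]; simpl in *.
    exists a, b. refine (conj Ha (conj Hb (conj H1 _))).
    assert (E : op a d = op c b).
    { apply (rcancel _ _ u). rewrite (Zc1 a d u Ha), <- H3, (Zc1 c b u Hc), <- H2,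
        (Zc_ex a c v Ha Hc). auto. }
    apply (lcancelZ c); auto.
    rewrite (Zc_ex c a t Hc Ha), H4, <- (Zc1 a d s Ha), E, (Zc1 c b s Hc). auto.
  - intros [x1 x2] [y1 y2] [u1 u2] [v1 v2] [a [b [Ha [Hb [H1 H2]]]]] [c [d [Hc [Hd [H3 H4]]]]];
      simpl in *.
    exists (op a c), (op b d). refine (conj (Zc_mul _ _ Ha Hc) (conj (Zc_mul _ _ Hb Hd) (conj _ _))).
    + rewrite (Zc_L1 a c x2 u2 Ha Hc), H1, H3, (Zc_L1 b d x1 u1 Hb Hd). auto.
    + rewrite (Zc_L1 a c y2 v2 Ha Hc), H2, H4, (Zc_L1 b d y1 v1 Hb Hd). auto.
  - intros [p1 p2] [p1' p2'] [q1 q2] [q1' q2'] [X1 X2] [X1' X2'] _ _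
      [a [b [Ha [Hb [H1 H2]]]]] [c [d [Hc [Hd [H3 H4]]]]] E E'; simpl in *.
    unfold pair_op in E, E'; simpl in E, E'. injection E as E1 E2. injection E' as E1' E2'.
    exists (op c b), (op d a). refine (conj (Zc_mul _ _ Hc Hb) (conj (Zc_mul _ _ Hd Ha) (conj _ _))).
    + exact (key_rdiv a b c d X1 X2 p1 p2 q1 q2 Ha Hb Hc Hd H1 H3 E1 E2).
    + exact (key_rdiv a b c d X1' X2' p1' p2' q1' q2' Ha Hb Hc Hd H2 H4 E1' E2').
Qed.

Lemma zmax_central : centralizes op (@fullrel L) zmax.
Proof.
  exists Cz. pose proof Cz_congr as HC.
  destruct HC as [Cp [Crefl [Csym [Ctrans [Ccomp Cdiv]]]]].
  split; [exact Cz_congr|]. split; [|split; [|split; [|split]]].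
  - intros; exact I.
  - intros x y [a [b [Ha [Hb H]]]]. split.
    + intros u _. destruct (rsolve b (op a u)) as [v Hv]. exists v. exists b, a.
      refine (conj Hb (conj Ha (conj _ _))); simpl; auto. rewrite (ZcC b v Hb). auto.
    + intros u v v' C1 C2.
      destruct (Ctrans _ _ _ (Csym _ _ C1) C2) as [a' [b' [Ha' [Hb' [K1 K2]]]]]; simpl in *.
      apply (lcancelZ a'); auto. congruence.
  - intros x y _. exists e, e. refine (conj Zc_e (conj Zc_e (conj _ _))); auto.
  - intros x y u v [a [b [Ha [Hb [H1 H2]]]]]; simpl in *. exists b, a.
    refine (conj Hb (conj Ha (conj _ _))); simpl; auto.
  - intros x y z u v w [a [b [Ha [Hb [H1 H2]]]]] [c [d [Hc [Hd [H3 H4]]]]]; simpl in *.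
    exists (op c a), (op d b). refine (conj (Zc_mul _ _ Hc Ha) (conj (Zc_mul _ _ Hd Hb) (conj _ _)));
      simpl.
    + rewrite (Zc1 c a z Hc), (Zc_ex c a z Hc Ha), H3, (Zc_ex a d y Ha Hd), H1, <- (Zc1 d b x Hd). auto.
    + rewrite (Zc1 c a w Hc), (Zc_ex c a w Hc Ha), H4, (Zc_ex a d v Ha Hd), H2, <- (Zc1 d b u Hd). auto.
Qed.

Lemma cent_Zc (zeta : L -> L -> Prop) a :
  congruence op zeta -> centralizes op (@fullrel L) zeta -> zeta e a -> Zc a.
Proof.
  intros Hz Hc Hea.
  destruct Hz as [_ [zrefl [zsym [ztrans [zcomp zdiv]]]]].
  destruct Hc as [C [[Cp [Crefl [Csym [Ctrans [Ccomp Cdiv]]]]] [Ci [Cii [Ciii [Civ Cv]]]]]].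
  assert (D1 : C (e, a) (e, a)) by (apply Crefl; exact Hea).
  assert (Cxx : forall x, C (x, x) (x, x)) by (intro x; apply Crefl; apply zrefl; exact I).
  assert (F1 : forall w, C (e, a) (w, op w a)).
  { intro w. apply Csym. pose proof (Ccomp _ _ _ _ (Ciii w e I) D1) as H.
    unfold pair_op in H; simpl in H. rewrite rid, lid, lid in H. exact H. }
  assert (F2 : forall w, C (e, a) (w, op a w)).
  { intro w. apply Csym. pose proof (Ccomp _ _ _ _ D1 (Ciii w e I)) as H.
    unfold pair_op in H; simpl in H. rewrite lid, rid, rid in H. exact H. }
  assert (U : forall u v v', C (e, a) (u, v) -> C (e, a) (u, v') -> v = v').
  { intros u v v'. apply (proj2 (Cii e a Hea)). }
  assert (comm : forall x, op a x = op x a) by (intro x; exact (U _ _ _ (F2 x) (F1 x))).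
  assert (F3 : forall x y, op (op x y) a = op x (op y a)).
  { intros x y. pose proof (Ccomp _ _ _ _ (Cxx x) (F1 y)) as H.
    unfold pair_op in H; simpl in H. rewrite rid in H.
    exact (U _ _ _ (F1 (op x y)) (Ctrans _ _ _ (F1 x) H)). }
  assert (F4 : forall x y, op (op a x) y = op a (op x y)).
  { intros x y. pose proof (Ccomp _ _ _ _ (F2 x) (Cxx y)) as H.
    unfold pair_op in H; simpl in H. rewrite lid in H.
    symmetry. exact (U _ _ _ (F2 (op x y)) (Ctrans _ _ _ (F2 y) H)). }
  assert (F5 : forall x y, op (op x a) y = op a (op x y)).
  { intros x y. pose proof (Ccomp _ _ _ _ (Csym _ _ (F1 x)) (Cxx y)) as H.
    unfold pair_op in H; simpl in H. rewrite lid in H.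
    symmetry. exact (U _ _ _ (F2 (op x y)) (Ctrans _ _ _ (F2 y) (Csym _ _ H))). }
  intros x y. split; [|split; [|split]]; auto.
  rewrite F5, (comm y), <- F3, comm. auto.
Qed.

Lemma center_iff x : center op e x <-> Zc x.
Proof.
  split.
  - intros [zeta [Hc [Hcent [_ Hex]]]]. exact (cent_Zc zeta x Hc Hcent Hex).
  - intro Hx. exists zmax. split; [exact zmax_cong|]. split; [exact zmax_central|]. split.
    + intros zeta' Hz Hc a b Hab. destruct (rsolve a b) as [t Ht].
      assert (Hz' := Hz). destruct Hz' as [_ [zrefl [_ [_ [_ zdiv]]]]].
      assert (Het : zeta' e t).
      { apply (zdiv a a a b e t I I (zrefl a I) Hab (lid a) Ht). }
      exists t, e. refine (conj (cent_Zc zeta' t Hz Hc Het) (conj Zc_e _)). rewrite lid. auto.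
    + exists x, e. refine (conj Hx (conj Zc_e _)). rewrite rid, lid. auto.
Qed.
End Loop.

Lemma sig_ext (A : Type) (P : A -> Prop) (u v : sig P) : proj1_sig u = proj1_sig v -> u = v.
Proof. destruct u, v; simpl; intro; subst; f_equal; apply proof_irrelevance. Qed.

Section Quot.
Variable S : Type.
Variable op : S -> S -> S.
Variable e : S.
Hypothesis HS : is_right_loop op e.
Variable T : S -> Prop.
Hypothesis HT : congruence op (coset op T).

Let q := qclass op T.

Lemma q_eq x y : q x = q y <-> coset op T x y.
Proof.
  destruct HT as [_ [crefl [csym [ctrans _]]]]. split.
  - intro H. apply (f_equal (@proj1_sig _ _)) in H. simpl in H. rewrite H. apply crefl; exact I.
  - intro H. apply sig_ext; simpl. extensionality z. apply propositional_extensionality.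
    split; intro Hz; [apply (ctrans y x z); [apply csym|]|apply (ctrans x y z)]; auto.
Qed.

Lemma q_rep P : q (qrep P) = P.
Proof.
  unfold q, qrep, qclass. destruct (constructive_indefinite_description _ _) as [x Hx]; simpl.
  apply sig_ext; simpl; auto.
Qed.

Lemma q_surj P : exists x, P = q x.
Proof. exists (qrep P). symmetry; apply q_rep. Qed.

Lemma q_hom x y : qop op T (q x) (q y) = q (op x y).
Proof.
  unfold qop. fold q. apply q_eq. destruct HT as [_ [_ [_ [_ [ccomp _]]]]].
  apply ccomp; apply q_eq; apply q_rep.
Qed.

Lemma Q_loop : is_right_loop (qop op T) (q e).
Proof.
  split; [|split].
  - intro P. destruct (q_surj P) as [x ->]. rewrite q_hom, (lid _ _ _ HS). auto.
  - intro P. destruct (q_surj P) as [x ->]. rewrite q_hom, (rid _ _ _ HS). auto.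
  - intros A B. destruct (q_surj A) as [a ->]. destruct (q_surj B) as [b ->].
    destruct (rsolve _ _ _ HS a b) as [X HX]. exists (q X). split.
    + rewrite q_hom, HX. auto.
    + intros X' HX'. destruct (q_surj X') as [x' ->]. rewrite q_hom in HX'.
      apply q_eq. destruct HT as [_ [crefl [_ [_ [_ cdiv]]]]].
      apply (cdiv a a (op X a) (op x' a) X x' I I (crefl a I)); auto.
      apply q_eq. rewrite HX, HX'. auto.
Qed.
End Quot.

Lemma pullback (S Q : Type) (op : S -> S -> S) (qo : Q -> Q -> Q) (q : S -> Q) zeta :
  (forall x y, qo (q x) (q y) = q (op x y)) -> congruence qo zeta ->
  congruence op (fun x y => zeta (q x) (q y)).
Proof.
  intros Hh [_ [zr [zs [zt [zc zd]]]]].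
  split; [|split; [|split; [|split; [|split]]]].
  - intros; split; exact I.
  - intros a _. apply zr; exact I.
  - intros a b; apply zs.
  - intros a b c; apply zt.
  - intros a a' b b' H1 H2. rewrite <- !Hh. apply zc; auto.
  - intros a a' b b' X X' _ _ H1 H2 E1 E2.
    apply (zd (q a) (q a') (q b) (q b')); auto; rewrite Hh; f_equal; auto.
Qed.

Lemma cong_equiv (S : Type) (op : S -> S -> S) (R R' : S -> S -> Prop) :
  congruence op R -> (forall x y, R x y <-> R' x y) -> congruence op R'.
Proof.
  intros H E. assert (R = R') as <-; auto.
  extensionality x; extensionality y; apply propositional_extensionality; auto.
Qed.

Lemma Zser_S_iff (S : Type) (op : S -> S -> S) (e : S) (HS : is_right_loop op e) j x :
  congruence op (coset op (Zser op e j)) ->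
  (Zser op e (Datatypes.S j) x <-> Zc _ (qop op (Zser op e j)) (qclass op (Zser op e j) x)).
Proof.
  intro H. cbn [Zser]. apply center_iff. apply Q_loop; auto.
Qed.

Lemma series_ok (S : Type) (op : S -> S -> S) (e : S) (HS : is_right_loop op e) j :
  congruence op (coset op (Zser op e j)).
Proof.
  induction j.
  - apply (cong_equiv _ _ (@eq S)).
    + split; [|split; [|split; [|split; [|split]]]]; intros; subst; auto.
      apply (rcancel _ _ _ HS X X' a'). congruence.
    + intros x y. cbn [Zser]. unfold coset. split.
      * intros ->. exists e. rewrite (lid _ _ _ HS). auto.
      * intros [t [-> ->]]. rewrite (lid _ _ _ HS). auto.
  - set (T := Zser op e j) in *. set (q := qclass op T).
    pose proof (Q_loop S op e HS T IHj) as QL.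
    apply (cong_equiv _ _ (fun x y => zmax _ (qop op T) (q x) (q y))).
    + apply (pullback S (quot op T) op (qop op T) q). apply q_hom; auto. apply (zmax_cong _ _ _ QL).
    + intros x y. split.
      * intros [a [b [Ha [Hb H]]]].
        destruct (rsolve _ _ _ HS x y) as [t Ht]. exists t. split; [|auto].
        apply (Zser_S_iff S op e HS j t IHj). fold T. fold q.
        rewrite <- Ht, <- (q_hom S op T IHj), <- (Zc1 _ _ _ _ _ Hb) in H.
        apply (rcancel _ _ _ QL) in H. subst a.
        destruct (rsolve _ _ _ QL b (q e)) as [b' Hb'].
        assert (Zc _ (qop op T) b') by exact (Zc_inv _ _ _ QL b b' Hb Hb').
        replace (q t) with (qop op T b' (qop op T b (q t))).
        { apply Zc_mul; auto. }
        rewrite <- (Zc2 _ _ _ _ _ Hb), Hb'. apply (lid _ _ _ QL).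
      * intros [t [Ht ->]]. apply (Zser_S_iff S op e HS j t IHj) in Ht. fold T q in Ht.
        exists (q t), (q e). refine (conj Ht (conj (Zc_e _ _ _ QL) _)).
        rewrite !(q_hom S op T IHj), (lid _ _ _ HS). auto.
Qed.

Section Main.
Variable S : Type.
Variable op : S -> S -> S.
Variable e : S.
Hypothesis HS : is_right_loop op e.

Definition RR j := coset op (Zser op e j).

Lemma respects j g : G_of op g -> forall x y, RR j x y -> RR j (g x) (g y).
Proof.
  intro Hg. destruct (series_ok S op e HS j) as [_ [crefl [csym [ctrans [ccomp cdiv]]]]].
  unfold RR. induction Hg as [| f [y [z Hf]] | f g [y [z Hf]] Hfg Hgf | f g _ IHf _ IHg].
  - auto.
  - intros x x' H. apply (cdiv (op y z) (op y z) (op (op x y) z) (op (op x' y) z) (f x) (f x') I I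
      (crefl _ I)); auto.
  - intros x x' H.
    assert (E : forall u, op u (op y z) = op (op (g u) y) z).
    { intro u. rewrite <- Hf, Hfg. auto. }
    assert (H1 : coset op (Zser op e j) (op (g x) y) (op (g x') y)).
    { apply (cdiv z z (op x (op y z)) (op x' (op y z)) _ _ I I (crefl z I)); auto. }
    apply (cdiv y y (op (g x) y) (op (g x') y) _ _ I I (crefl y I)); auto.
  - intros x x' H. apply IHf, IHg, H.
Qed.

Lemma RR_sym j x y : RR j x y -> RR j y x.
Proof. destruct (series_ok S op e HS j) as [_ [_ [csym _]]]. apply csym. Qed.
Lemma RR_trans j x y z : RR j x y -> RR j y z -> RR j x z.
Proof. destruct (series_ok S op e HS j) as [_ [_ [_ [ct _]]]]. apply ct. Qed.
Lemma RR_refl j x : RR j x x.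
Proof. destruct (series_ok S op e HS j) as [_ [cr _]]. apply cr; exact I. Qed.

Lemma ker_iff j g : ker_theta op e j g <-> G_of op g /\ forall x, RR j x (g x).
Proof.
  pose proof (series_ok S op e HS j) as HT.
  unfold ker_theta, theta. split.
  - intros [HG H]. split; auto. intro x.
    specialize (H (qclass op (Zser op e j) x)).
    apply (q_eq S op _ HT) in H.
    pose proof (q_rep S op _ (qclass op (Zser op e j) x)) as H2.
    apply (q_eq S op _ HT) in H2.
    apply (RR_trans j x (g (qrep (qclass op (Zser op e j) x)))).
    + apply RR_sym. exact H.
    + apply respects; auto.
  - intros [HG H]. split; auto. intro P.
    transitivity (qclass op (Zser op e j) (qrep P)); [|apply q_rep].
    apply (q_eq S op _ HT). apply RR_sym, H.
Qed.

Lemma G_inv g : G_of op g -> exists g', G_of op g' /\ (forall x, g (g' x) = x) /\ (forall x, g' (g x) = x).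
Proof.
  intro Hg. induction Hg as [| f Hgen | f g Hgen Hfg Hgf | f g Hf [f' [Hf' [A1 A2]]] Hg [g' [Hg' [B1 B2]]]].
  - exists (fun x => x). repeat split; [constructor|..]; auto.
  - destruct Hgen as [y [z Hf]].
    assert (surj : forall x, exists u, f u = x).
    { intro x. destruct (rsolve _ _ _ HS z (op x (op y z))) as [w Hw].
      destruct (rsolve _ _ _ HS y w) as [u Hu]. exists u.
      apply (rcancel _ _ _ HS _ _ (op y z)). rewrite Hf, Hu, Hw. auto. }
    assert (inj : forall u v, f u = f v -> u = v).
    { intros u v H. apply (rcancel _ _ _ HS _ _ y), (rcancel _ _ _ HS _ _ z).
      rewrite <- !Hf, H. auto. }
    set (g' := fun x => proj1_sig (constructive_indefinite_description _ (surj x))).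
    assert (K : forall x, f (g' x) = x).
    { intro x. unfold g'. destruct (constructive_indefinite_description _ _); auto. }
    exists g'. split; [|split; [exact K|]].
    + apply (gg_inv _ f g'); [exists y, z; auto|auto|]. intro x; apply inj; rewrite K; auto.
    + intro x; apply inj; rewrite K; auto.
  - exists f. split; [apply gg_gen; auto|split; auto].
  - exists (fun x => g' (f' x)). split; [apply gg_comp; auto|split]; intro x.
    + rewrite B1, A1. auto.
    + rewrite A2, B2. auto.
Qed.

Lemma RR0 x y : RR 0 x y <-> y = x.
Proof.
  unfold RR, coset; cbn [Zser]. split.
  - intros [t [-> ->]]. apply lid; auto.
  - intros ->. exists e. rewrite (lid _ _ _ HS). auto.
Qed.

Lemma Zser_mono j x : Zser op e j x -> Zser op e (Datatypes.S j) x.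
Proof.
  intro H. pose proof (series_ok S op e HS j) as HT.
  apply (Zser_S_iff S op e HS j x HT).
  replace (qclass op (Zser op e j) x) with (qclass op (Zser op e j) e).
  - apply (Zc_e _ _ _ (Q_loop S op e HS _ HT)).
  - apply (q_eq S op _ HT). exists x. split; auto. rewrite (rid _ _ _ HS). auto.
Qed.


Local Notation qq j := (qclass op (Zser op e j)).
Local Notation QO j := (qop op (Zser op e j)).

Lemma gen_shift j f y z c x : is_f op y z f -> Zc _ (QO j) (qq j c) ->
  qq j (f (op c x)) = QO j (qq j c) (qq j (f x)).
Proof.
  intros Hf Hc. pose proof (series_ok S op e HS j) as HT.
  pose proof (Q_loop S op e HS _ HT) as QL.
  apply (rcancel _ _ _ QL _ _ (qq j (op y z))).
  rewrite (Zc1 _ _ _ _ _ Hc), !(q_hom S op _ HT), !Hf, <- !(q_hom S op _ HT).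
  rewrite (Zc1 _ _ _ _ _ Hc), (Zc1 _ _ _ _ _ Hc). auto.
Qed.

Lemma f_inj_q j f y z u v : is_f op y z f -> qq j (f u) = qq j (f v) -> qq j u = qq j v.
Proof.
  intros Hf H. pose proof (series_ok S op e HS j) as HT.
  pose proof (Q_loop S op e HS _ HT) as QL.
  apply (rcancel _ _ _ QL _ _ (qq j y)), (rcancel _ _ _ QL _ _ (qq j z)).
  rewrite !(q_hom S op _ HT), <- !Hf, <- !(q_hom S op _ HT), H. auto.
Qed.

Lemma shift j g : G_of op g -> forall c x, Zc _ (QO j) (qq j c) ->
  qq j (g (op c x)) = QO j (qq j c) (qq j (g x)).
Proof.
  intro Hg. pose proof (series_ok S op e HS j) as HT.
  induction Hg as [| f [y [z Hf]] | f g [y [z Hf]] Hfg Hgf | f g Hf IHf Hg IHg];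
    intros c x Hc.
  - rewrite (q_hom S op _ HT). auto.
  - apply (gen_shift j f y z); auto.
  - rewrite (q_hom S op _ HT). apply (f_inj_q j f y z); auto.
    rewrite Hfg, (gen_shift j f y z); auto. rewrite Hfg, (q_hom S op _ HT). auto.
  - rewrite <- (IHf c (g x) Hc).
    apply (q_eq S op _ HT). apply respects; auto.
    apply (q_eq S op _ HT). rewrite (IHg c x Hc), (q_hom S op _ HT). auto.
Qed.

Lemma top_triv m : (forall x, Zser op e (Datatypes.S m) x) ->
  forall g, G_of op g -> forall x, RR m x (g x).
Proof.
  intros HZ g Hg. pose proof (series_ok S op e HS m) as HT.
  pose proof (Q_loop S op e HS _ HT) as QL.
  assert (cent : forall x, Zc _ (QO m) (qq m x)).
  { intro x. apply (Zser_S_iff S op e HS m x HT), HZ. }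
  induction Hg as [| f [y [z Hf]] | f g [y [z Hf]] Hfg Hgf | f g Hf IHf Hg IHg]; intro x.
  - apply RR_refl.
  - apply (q_eq S op _ HT). apply (rcancel _ _ _ QL _ _ (qq m (op y z))).
    rewrite !(q_hom S op _ HT), Hf, <- !(q_hom S op _ HT).
    rewrite (Zc1 _ _ _ _ _ (cent x)). auto.
  - apply RR_sym.
    assert (K : RR m (g x) (f (g x))).
    { apply (q_eq S op _ HT). apply (rcancel _ _ _ QL _ _ (qq m (op y z))).
      rewrite !(q_hom S op _ HT), Hf, <- !(q_hom S op _ HT).
      rewrite (Zc1 _ _ _ _ _ (cent (g x))). auto. }
    rewrite Hfg in K. exact K.
  - apply (RR_trans m x (g x)); auto.
Qed.

Definition dsol (g : S -> S) b : S :=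
  proj1_sig (constructive_indefinite_description _ (rsolve _ _ _ HS b (g b))).
Lemma dsol_spec g b : op (dsol g b) b = g b.
Proof. unfold dsol. destruct (constructive_indefinite_description _ _); auto. Qed.

Lemma dsol_Z j h b : RR (Datatypes.S j) b (h b) -> Zser op e (Datatypes.S j) (dsol h b).
Proof.
  intros [t [Ht E]]. replace (dsol h b) with t; auto.
  apply (rcancel _ _ _ HS _ _ b). rewrite dsol_spec. auto.
Qed.

End Main.

Theorem mainTheorem14 (S : Type) (op : S -> S -> S) (e : S)
  (HS : is_right_loop op e) (n : nat) (Hn : 0 < n)
  (HZn : forall x, Zser op e n x) :
  (* ker theta_0 = {1} *)
  (forall g, ker_theta op e 0 g <-> (G_of op g /\ forall x, g x = x)) /\
  (* ker theta_j <= ker theta_(j+1) *)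
  (forall j, j + 1 <= n - 1 -> forall g, ker_theta op e j g -> ker_theta op e (j + 1) g) /\
  (* ker theta_(n-1) = G_S *)
  (forall g, ker_theta op e (n - 1) g <-> G_of op g) /\
  (* ker theta_(j+1) / ker theta_j embeds in prod_B Z_(j+1)/Z_j *)
  (forall j, j + 1 <= n - 1 ->
     exists (B : Type) (phi : (S -> S) -> B -> quot op (Zser op e j)),
       (forall g b, ker_theta op e (j + 1) g ->
          exists x, Zser op e (j + 1) x /\ phi g b = qclass op (Zser op e j) x) /\
       (forall g h, ker_theta op e (j + 1) g -> ker_theta op e (j + 1) h ->
          forall b, phi (fun x => g (h x)) b = qop op (Zser op e j) (phi g b) (phi h b)) /\
       (forall g h, ker_theta op e (j + 1) g -> ker_theta op e (j + 1) h ->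
          ((forall b, phi g b = phi h b) <->
           exists k, ker_theta op e j k /\ forall x, h x = g (k x)))).
Proof.
  split; [|split; [|split]].
  - intro g. rewrite (ker_iff S op e HS 0 g). split; intros [HG H]; split; auto; intro x.
    + apply (RR0 S op e HS), H.
    + apply (RR0 S op e HS), H.
  - intros j Hj g H. rewrite Nat.add_1_r. apply (ker_iff S op e HS) in H.
    apply (ker_iff S op e HS). destruct H as [HG H]; split; auto. intro x.
    destruct (H x) as [t [Ht E]]. exists t; split; auto. apply Zser_mono; auto.
  - intro g. split; [intros [HG _]; exact HG|intro HG].
    destruct n as [|m]; [lia|]. replace (Datatypes.S m - 1) with m by lia.
    apply (ker_iff S op e HS). split; auto. apply top_triv; auto.
  - intros j Hj. rewrite Nat.add_1_r.
    pose proof (series_ok S op e HS j) as HT.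
    pose proof (Q_loop S op e HS _ HT) as QL.
    assert (cz : forall h b, ker_theta op e (Datatypes.S j) h ->
      Zc _ (qop op (Zser op e j)) (qclass op (Zser op e j) (dsol S op e HS h b))).
    { intros h b Hh. apply (Zser_S_iff S op e HS j _ HT). apply dsol_Z.
      apply (ker_iff S op e HS) in Hh. apply Hh. }
    exists S, (fun g b => qclass op (Zser op e j) (dsol S op e HS g b)).
    split; [|split].
    + intros g b Hg. exists (dsol S op e HS g b). split; auto. apply dsol_Z.
      apply (ker_iff S op e HS) in Hg. apply Hg.
    + intros g h Hg Hh b. cbn beta.
      pose proof (cz g b Hg) as Hc1. pose proof (cz h b Hh) as Hc2.
      apply (ker_iff S op e HS) in Hg. destruct Hg as [HG _].
      apply (rcancel _ _ _ QL _ _ (qclass op (Zser op e j) b)).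
      rewrite (q_hom S op _ HT (dsol S op e HS (fun x => g (h x)) b) b), dsol_spec. cbn beta.
      rewrite <- (dsol_spec S op e HS h b).
      rewrite (shift S op e HS j g HG _ b Hc2).
      rewrite <- (dsol_spec S op e HS g b), <- (q_hom S op _ HT (dsol S op e HS g b) b).
      rewrite (ZcC _ _ _ (qclass op (Zser op e j) (dsol S op e HS h b)) Hc1), (Zc1 _ _ _ _ _ Hc2). auto.
    + intros g h Hg Hh.
      apply (ker_iff S op e HS) in Hg. destruct Hg as [HG Rg].
      apply (ker_iff S op e HS) in Hh. destruct Hh as [HH Rh]. split.
      * intro Hphi.
        assert (E : forall b, RR S op e j (g b) (h b)).
        { intro b. apply (q_eq S op _ HT).
          rewrite <- (dsol_spec S op e HS g b), <- (dsol_spec S op e HS h b),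
            <- !(q_hom S op _ HT), Hphi. auto. }
        destruct (G_inv S op e HS g HG) as [g' [HG' [A1 A2]]].
        exists (fun x => g' (h x)). split.
        -- apply (ker_iff S op e HS). split; [apply gg_comp; auto|].
           intro x. pose proof (respects S op e HS j g' HG' _ _ (E x)) as K.
           rewrite A2 in K. exact K.
        -- intro x. rewrite A1. auto.
      * intros [k [Hk E]] b. apply (ker_iff S op e HS) in Hk. destruct Hk as [HK Rk].
        apply (rcancel _ _ _ QL _ _ (qclass op (Zser op e j) b)).
        rewrite !(q_hom S op _ HT), !dsol_spec, E.
        apply (q_eq S op _ HT). apply (respects S op e HS j g HG). apply Rk.
Qed.
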